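(* Let $\mathcal H$ be a complex Hilbert space and $\mathbf T=(T_1,\dots,T_n)\in B(\mathcal H)^n$ a doubly commuting $n$-tuple such that each $T_j$ has Property (1) (see context). If $z=(z_1,\dots,z_n)\in\sigma_T(\mathbf T)$, then there exist unit vectors $y_m\in\mathcal H$ such that $(T_j-z_j)^*y_m\to0$ as $m\to\infty$ for all $j=1,\dots,n$; that is, $\overline z=(\overline{z_1},\dots,\overline{z_n})$ belongs to the joint approximate point spectrum of $\mathbf T^*=(T_1^*,\dots,T_n^* )$.
   Context: Doubly commuting: $T_iT_j=T_jT_i$ and $T_i^*T_j=T_jT_i^*$ for $i\ne j$. Property (1) for an operator $T$: for every $z\in\mathbb C$ and every sequence $\{x_m\}$ of unit vectors, $(T-z)x_m\to0$ implies $(T-z)^*x_m\to0$. $\sigma_T$ denotes the Taylor spectrum: $z\in\sigma_T(\mathbf T)$ iff the Koszul complex of $(T_1-z_1,\dots,T_n-z_n)$ is not exact, where for a commuting tuple $\mathbf A$ the Koszul complex is $0\to E^n_n(\mathcal H)\xrightarrow{D_n}\cdots\xrightarrow{D_1}E^n_0(\mathcal H)\to0$ with $E^n_k(\mathcal H)=\mathcal H\otimes E^n_k$ ($E^n$ the exterior algebra on $e_1,\dots,e_n$) and $D_k(x\otimes e_{j_1}\wedge\cdots\wedge e_{j_k})=\sum_{i=1}^k(-1)^{i-1}A_{j_i}x\otimes e_{j_1}\wedge\cdots\wedge\check e_{j_i}\wedge\cdots\wedge e_{j_k}$. The joint approximate point spectrum of $(A_1,\dots,A_n)$ is the set of $w\in\mathbb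 C^n$ for which there are unit vectors $x_m$ with $(A_j-w_j)x_m\to0$ for all $j$. *)

(* Defs.v *)
From HB Require Import structures.
From mathcomp Require Import all_boot all_order all_algebra.
From mathcomp Require Import all_classical all_reals topology normedtype sequences.
From mathcomp Require Import complex.
Set Implicit Arguments. Unset Strict Implicit. Unset Printing Implicit Defensive.
Import Order.TTheory GRing.Theory Num.Theory.
Import numFieldNormedType.Exports.
Local Open Scope classical_set_scope.
Local Open Scope ring_scope.

Section Defs.
Variables (R : realType) (H : lmodType R[i]).

Definition ipnorm (ip : H -> H -> R[i]) (x : H) : R := Num.sqrt (complex.Re (ip x x)).

Definition is_hilbert_space (ip : H -> H -> R[i]) : Prop :=
  [/\ (forall (a : R[i]) (x y z : H), ip (a *: x + y) z = a * ip x z + ip y z),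
      (forall x y : H, ip x y = conjc (ip y x)),
      (forall x : H, complex.Im (ip x x) = 0 /\ 0 <= complex.Re (ip x x)),
      (forall x : H, ip x x = 0 -> x = 0) &
      (forall u : nat -> H,
         (forall e : R, 0 < e -> exists N : nat, forall m p : nat,
             (N <= m)%N -> (N <= p)%N -> ipnorm ip (u m - u p) < e) ->
         exists l : H, (fun m => ipnorm ip (u m - l)) @ \oo --> (0 : R))].

Definition bounded_op (ip : H -> H -> R[i]) (T : H -> H) : Prop :=
  linear T /\ exists c : R, forall x : H, ipnorm ip (T x) <= c * ipnorm ip x.

Definition is_adjoint (ip : H -> H -> R[i]) (T Tadj : H -> H) : Prop :=
  forall x y : H, ip (T x) y = ip x (Tadj y).

Definition doubly_commuting (n : nat) (T Tadj : 'I_n -> H -> H) : Prop :=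
  forall i j : 'I_n, i != j ->
    (forall x, T i (T j x) = T j (T i x)) /\
    (forall x, Tadj i (T j x) = T j (Tadj i x)).

(* Property (1) for T with adjoint Tadj; (T - z)^* = Tadj - conj z. *)
Definition property1 (ip : H -> H -> R[i]) (T Tadj : H -> H) : Prop :=
  forall (z : R[i]) (x : nat -> H),
    (forall m, ipnorm ip (x m) = 1) ->
    (fun m => ipnorm ip (T (x m) - z *: x m)) @ \oo --> (0 : R) ->
    (fun m => ipnorm ip (Tadj (x m) - conjc z *: x m)) @ \oo --> (0 : R).

(* E^n(H) = H (x) E^n is encoded as maps {set 'I_n} -> H,
   f S being the coefficient of e_S = e_{j_1} /\ ... /\ e_{j_k}
   (j_1 < ... < j_k the elements of S).  E^n_k(H) = those f supported on
   k-element sets. *)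
Definition kchain (n k : nat) (f : {set 'I_n} -> H) : Prop :=
  forall S : {set 'I_n}, #|S| != k -> f S = 0.

(* D(x (x) e_S) = sum_i (-1)^(i-1) A_{j_i} x (x) e_{S \ j_i}; hence the
   coefficient of e_S' in D f is sum over j notin S' of
   (-1)^#{i in S' | i < j} A_j (f (j |: S')). *)
Definition koszulD (n : nat) (A : 'I_n -> H -> H) (f : {set 'I_n} -> H)
  : {set 'I_n} -> H :=
  fun S' => \sum_(j < n | j \notin S')
     (-1) ^+ #|[set i in S' | (i < j)%N]| *: A j (f (j |: S')).

Definition koszul_exact_at (n : nat) (A : 'I_n -> H -> H) (k : nat) : Prop :=
  (forall f, kchain k f -> koszulD A f = (fun _ => 0) ->
     exists g, kchain k.+1 g /\ koszulD A g = f) /\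
  (forall g, kchain k.+1 g -> koszulD A (koszulD A g) = (fun _ => 0)).

Definition koszul_exact (n : nat) (A : 'I_n -> H -> H) : Prop :=
  forall k : nat, (k <= n)%N -> koszul_exact_at A k.

Definition taylor_spectrum (n : nat) (T : 'I_n -> H -> H) (z : 'I_n -> R[i])
  : Prop :=
  ~ koszul_exact (fun j x => T j x - z j *: x).

Definition joint_approx_point_spectrum (ip : H -> H -> R[i]) (n : nat)
  (A : 'I_n -> H -> H) (w : 'I_n -> R[i]) : Prop :=
  exists y : nat -> H, (forall m, ipnorm ip (y m) = 1) /\
    forall j : 'I_n, (fun m => ipnorm ip (A j (y m) - w j *: y m)) @ \oo --> (0 : R).

End Defs.

(* Main.v *)
Require Import Defs.
From HB Require Import structures.
From mathcomp Require Import all_boot all_order all_algebra.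
From mathcomp Require Import all_classical all_reals topology normedtype sequences.
From mathcomp Require Import complex.
From mathcomp Require Import ring lra.
Import Order.TTheory GRing.Theory Num.Theory.
Import numFieldNormedType.Exports.
Local Open Scope classical_set_scope.
Local Open Scope ring_scope.
Set Implicit Arguments. Unset Strict Implicit. Unset Printing Implicit Defensive.

Section Cplx.
Variable R : realType.
Local Open Scope complex_scope.
Implicit Types x y : R[i].
Lemma ReD x y : complex.Re (x + y) = complex.Re x + complex.Re y.
Proof. by case: x; case: y. Qed.
Lemma ReN x : complex.Re (- x) = - complex.Re x.
Proof. by case: x. Qed.
Lemma ReB x y : complex.Re (x - y) = complex.Re x - complex.Re y.
Proof. by rewrite ReD ReN. Qed.
Lemma ReJ x : complex.Re (conjc x) = complex.Re x.
Proof. by case: x. Qed.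
Lemma ReM x y : complex.Re (x * y) = complex.Re x * complex.Re y - complex.Im x * complex.Im y.
Proof. by case: x; case: y. Qed.
Lemma ImM x y : complex.Im (x * y) = complex.Re x * complex.Im y + complex.Im x * complex.Re y.
Proof. by case: x => a b; case: y => c d. Qed.
Lemma conjD x y : conjc (x + y) = conjc x + conjc y.
Proof. case: x => a b; case: y => c d /=. by rewrite opprD. Qed.
Lemma conjM x y : conjc (x * y) = conjc x * conjc y.
Proof. case: x => a b; case: y => c d /=. congr (_ +i* _); ring. Qed.
Lemma conjK x : conjc (conjc x) = x.
Proof. by case: x => a b /=; rewrite opprK. Qed.
Lemma conj0 : conjc (0 : R[i]) = 0.
Proof. by rewrite /= oppr0. Qed.
Lemma conjN x : conjc (- x) = - conjc x.
Proof. by case: x => a b /=. Qed.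
Lemma ReC (r : R) : complex.Re (r%:C)%C = r. Proof. by []. Qed.
Lemma ImC (r : R) : complex.Im (r%:C)%C = 0. Proof. by []. Qed.
Lemma conjC_real (r : R) : conjc (r%:C)%C = (r%:C)%C.
Proof. by rewrite /= oppr0. Qed.
Lemma ReMC (r : R) x : complex.Re ((r%:C)%C * x) = r * complex.Re x.
Proof. by rewrite ReM ReC ImC mul0r subr0. Qed.
Lemma oppC (r : R) : ((- r)%:C)%C = - (r%:C)%C.
Proof. by apply/eqP; rewrite eq_complex /= oppr0 !eqxx. Qed.
End Cplx.

Section Seq.
Variable R : realType.
Lemma cvg0_eps (u : nat -> R) :
  (forall e, 0 < e -> exists N, forall m, (N <= m)%N -> `|u m| < e) ->
  u @ \oo --> (0 : R).
Proof.
move=> h; apply/cvgrPdist_lt => e e0; have [N hN] := h e e0.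
exists N => // m /= Nm; rewrite sub0r normrN; exact: hN.
Qed.
Lemma eps_cvg0 (u : nat -> R) : u @ \oo --> (0 : R) ->
  forall e, 0 < e -> exists N, forall m, (N <= m)%N -> `|u m| < e.
Proof.
move=> /cvgrPdist_lt h e e0; have [N _ hN] := h e e0.
by exists N => m Nm; have := hN m Nm; rewrite /= sub0r normrN.
Qed.
Lemma sq_harm_cvg (u : nat -> R) : (forall m, 0 <= u m) ->
  (forall m, u m ^+ 2 <= (m.+1%:R)^-1) -> u @ \oo --> (0 : R).
Proof.
move=> u0 hu; apply: cvg0_eps => e e0.
have e20 : 0 < e ^+ 2 by rewrite exprn_gt0.
have hb : (e ^+ 2)^-1 < (Num.Def.archi_bound (e ^+ 2)^-1)%:R.
  by apply: archi_boundP; rewrite invr_ge0 ltW.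
exists (Num.Def.archi_bound (e ^+ 2)^-1) => m Nm.
rewrite ger0_norm // -ltr_sqr ?nnegrE ?(ltW e0) //.
apply: (le_lt_trans (hu m)).
rewrite -(invrK (e ^+ 2)) ltf_pV2 ?posrE ?invr_gt0 ?ltr0Sn //.
apply: (lt_le_trans hb); rewrite ler_nat; exact: (leq_trans Nm).
Qed.
Lemma le0_eps (a : R) : (forall e, 0 < e -> a <= e) -> a <= 0.
Proof.
move=> h; rewrite leNgt; apply/negP => a0.
have := h (a / 2) (divr_gt0 a0 (ltr0Sn _ 1)).
rewrite ler_pdivlMr ?ltr0Sn //; nra.
Qed.
End Seq.

Section Hil.
Variables (R : realType) (H : lmodType R[i]) (ip : H -> H -> R[i]).
Hypothesis hip : is_hilbert_space ip.
Local Notation N2 x := (complex.Re (ip x x)).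
Local Notation nm := (ipnorm ip).
Local Notation "r %:C" := (real_complex R r).

Lemma ipDZl a x y z : ip (a *: x + y) z = a * ip x z + ip y z.
Proof. by case: hip. Qed.
Lemma ipC x y : ip x y = conjc (ip y x).
Proof. by case: hip. Qed.
Lemma ip0l z : ip 0 z = 0.
Proof. by have := ipDZl (-1) 0 0 z; rewrite scaler0 addr0 mulN1r addNr. Qed.
Lemma ipDl x y z : ip (x + y) z = ip x z + ip y z.
Proof. by rewrite -[x in LHS]scale1r ipDZl mul1r. Qed.
Lemma ipZl a x z : ip (a *: x) z = a * ip x z.
Proof. by rewrite -[a *: x]addr0 ipDZl ip0l addr0. Qed.
Lemma ipNl x z : ip (- x) z = - ip x z.
Proof. by rewrite -scaleN1r ipZl mulN1r. Qed.
Lemma ipBl x y z : ip (x - y) z = ip x z - ip y z.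
Proof. by rewrite ipDl ipNl. Qed.
Lemma ip0r z : ip z 0 = 0.
Proof. by rewrite ipC ip0l conj0. Qed.
Lemma ipDr x y z : ip x (y + z) = ip x y + ip x z.
Proof. by rewrite ipC ipDl conjD -!ipC. Qed.
Lemma ipZr a x z : ip x (a *: z) = conjc a * ip x z.
Proof. by rewrite ipC ipZl conjM -ipC. Qed.
Lemma ipNr x z : ip x (- z) = - ip x z.
Proof. by rewrite ipC ipNl conjN -ipC. Qed.
Lemma ipBr x y z : ip x (y - z) = ip x y - ip x z.
Proof. by rewrite ipDr ipNr. Qed.
Lemma ip_suml I (r : seq I) (P : pred I) (F : I -> H) z :
  ip (\sum_(i <- r | P i) F i) z = \sum_(i <- r | P i) ip (F i) z.
Proof. by apply: (big_morph (fun v => ip v z)); [move=> *; exact: ipDl|exact: ip0l]. Qed.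
Lemma Re_sum I (r : seq I) (P : pred I) (F : I -> R[i]) :
  complex.Re (\sum_(i <- r | P i) F i) = \sum_(i <- r | P i) complex.Re (F i).
Proof. by apply: (big_morph (@complex.Re R)); [move=> *; exact: ReD|]. Qed.

Lemma Imxx x : complex.Im (ip x x) = 0.
Proof. by case: hip => _ _ h _ _; case: (h x). Qed.
Lemma N2ge0 x : 0 <= N2 x.
Proof. by case: hip => _ _ h _ _; case: (h x). Qed.
Lemma ipxx x : ip x x = (N2 x)%:C.
Proof. by move: (Imxx x); case: (ip x x) => a b /= ->. Qed.
Lemma N2_eq0 x : N2 x = 0 -> x = 0.
Proof. by case: hip => _ _ _ h _ e; apply: h; rewrite ipxx e. Qed.
Lemma nm0 : nm 0 = 0.
Proof. by rewrite /ipnorm ip0l /= sqrtr0. Qed.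
Lemma nm_ge0 x : 0 <= nm x.
Proof. exact: sqrtr_ge0. Qed.
Lemma nm_sq x : nm x ^+ 2 = N2 x.
Proof. by rewrite /ipnorm sqr_sqrtr // N2ge0. Qed.
Lemma nm_eq0 x : nm x = 0 -> x = 0.
Proof.
move=> e; apply: N2_eq0; by rewrite -nm_sq e expr0n.
Qed.
Lemma Re_ipC x y : complex.Re (ip y x) = complex.Re (ip x y).
Proof. by rewrite ipC ReJ. Qed.

Lemma N2D x y : N2 (x + y) = N2 x + N2 y + 2 * complex.Re (ip x y).
Proof.
rewrite ipDl !ipDr !ReD (Re_ipC x y). ring.
Qed.
Lemma N2N x : N2 (- x) = N2 x.
Proof. by rewrite ipNl ipNr opprK. Qed.
Lemma N2Z a x : N2 (a *: x) = (complex.Re a ^+ 2 + complex.Im a ^+ 2) * N2 x.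
Proof.
rewrite ipZl ipZr ipxx mulrA.
rewrite ReM ImC mulr0 subr0.
case: a => a b /=. ring.
Qed.
Lemma N2ZC (r : R) x : N2 (r%:C *: x) = r ^+ 2 * N2 x.
Proof. by rewrite N2Z /= expr0n addr0. Qed.

Definition cn (a : R[i]) := Num.sqrt (complex.Re a ^+ 2 + complex.Im a ^+ 2).
Lemma nmZ a x : nm (a *: x) = cn a * nm x.
Proof. by rewrite /ipnorm N2Z sqrtrM // addr_ge0 // sqr_ge0. Qed.
Lemma cnC (r : R) : cn (r%:C) = `|r|.
Proof. by rewrite /cn /= expr0n addr0 sqrtr_sqr. Qed.
Lemma nmZC (r : R) x : nm (r%:C *: x) = `|r| * nm x.
Proof. by rewrite nmZ cnC. Qed.
Lemma nmN x : nm (- x) = nm x.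
Proof. by rewrite /ipnorm N2N. Qed.
Lemma nmB x y : nm (x - y) = nm (y - x).
Proof. by rewrite -nmN opprB. Qed.

Lemma Re_ip_le x y : complex.Re (ip x y) <= nm x * nm y.
Proof.
have [x0|] := eqVneq (nm x) 0.
  by rewrite x0 mul0r (nm_eq0 x0) ip0l.
have [y0|] := eqVneq (nm y) 0.
  by rewrite y0 mulr0 (nm_eq0 y0) ip0r.
move=> ny nx.
have nx0 : 0 < nm x by rewrite lt0r nx nm_ge0.
have ny0 : 0 < nm y by rewrite lt0r ny nm_ge0.
have := N2ge0 ((nm y)%:C *: x - (nm x)%:C *: y).
rewrite N2D N2N !N2ZC -!nm_sq ipZl ipNr ipZr mulrN ReN conjC_real !ReMC.
set a := nm x; set b := nm y; set r := complex.Re _ => h.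
have hab : 0 < a * b by rewrite mulr_gt0.
have : a * b * r <= a * b * (a * b) by nra.
by rewrite ler_pM2l.
Qed.

Lemma nm_triangle x y : nm (x + y) <= nm x + nm y.
Proof.
rewrite -ler_sqr ?nnegrE ?addr_ge0 ?nm_ge0 //.
rewrite nm_sq N2D -!nm_sq.
have := Re_ip_le x y; set r := complex.Re _ => h.
have := nm_ge0 x; have := nm_ge0 y; nra.
Qed.

Lemma nm_sub_tri x y z : nm (x - z) <= nm (x - y) + nm (y - z).
Proof. have -> : x - z = (x - y) + (y - z) by rewrite addrA subrK. exact: nm_triangle. Qed.

Lemma ip_ext v v' : (forall u, ip u v = ip u v') -> v = v'.
Proof.
move=> h; apply/eqP; rewrite -subr_eq0; apply/eqP/N2_eq0.
by rewrite ipBr h subrr.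
Qed.

Definition lin (A : H -> H) := forall a x y, A (a *: x + y) = a *: A x + A y.
Definition bnd (A : H -> H) := exists M, 0 <= M /\ forall x, nm (A x) <= M * nm x.

Section Lin.
Variable A : H -> H.
Hypothesis lA : lin A.
Lemma lin0 : A 0 = 0.
Proof. by have := lA (-1) 0 0; rewrite scaler0 addr0 scaleN1r addNr. Qed.
Lemma linD x y : A (x + y) = A x + A y.
Proof. by rewrite -[x in LHS]scale1r lA scale1r. Qed.
Lemma linZ a x : A (a *: x) = a *: A x.
Proof. by rewrite -[a *: x]addr0 lA lin0 addr0. Qed.
Lemma linN x : A (- x) = - A x.
Proof. by rewrite -scaleN1r linZ scaleN1r. Qed.
Lemma linB x y : A (x - y) = A x - A y.
Proof. by rewrite linD linN. Qed.
Lemma lin_sum I (r : seq I) (P : pred I) (F : I -> H) :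
  A (\sum_(i <- r | P i) F i) = \sum_(i <- r | P i) A (F i).
Proof. by apply: (big_morph A); [move=> *; exact: linD|exact: lin0]. Qed.
End Lin.

Lemma lin_comp A B : lin A -> lin B -> lin (fun x => A (B x)).
Proof. by move=> lA lB a x y; rewrite lB lA. Qed.
Lemma lin_add A B : lin A -> lin B -> lin (fun x => A x + B x).
Proof.
move=> lA lB a x y; rewrite lA lB scalerDr.
by rewrite -!addrA; congr (_ + _); rewrite addrCA.
Qed.
Lemma lin_sumf I (r : seq I) (P : pred I) (F : I -> H -> H) :
  (forall i, lin (F i)) -> lin (fun x => \sum_(i <- r | P i) F i x).
Proof.
move=> lF a x y; rewrite scaler_sumr -big_split /=.
by apply: eq_bigr => i _; rewrite lF.
Qed.
Lemma lin_shift A z : lin A -> lin (fun x => A x - z *: x).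
Proof.
move=> lA a x y; rewrite lA scalerDr scalerBr !scalerA mulrC.
rewrite -!addrA; congr (_ + _); rewrite opprD addrCA; congr (_ + _).
Qed.

Lemma bnd_ext A B : (forall x, A x = B x) -> bnd A -> bnd B.
Proof. by move=> e [M [M0 h]]; exists M; split=> // x; rewrite -e. Qed.
Lemma bnd_comp A B : bnd A -> bnd B -> bnd (fun x => A (B x)).
Proof.
move=> [M [M0 hA]] [N [N0 hB]]; exists (M * N); split; first exact: mulr_ge0.
move=> x; apply: (le_trans (hA _)); rewrite -mulrA ler_wpM2l //.
Qed.
Lemma bnd_add A B : bnd A -> bnd B -> bnd (fun x => A x + B x).
Proof.
move=> [M [M0 hA]] [N [N0 hB]]; exists (M + N); split; first exact: addr_ge0.
move=> x; apply: (le_trans (nm_triangle _ _)); rewrite mulrDl lerD //.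
Qed.
Lemma bnd_sumf I (r : seq I) (P : pred I) (F : I -> H -> H) :
  (forall i, bnd (F i)) -> bnd (fun x => \sum_(i <- r | P i) F i x).
Proof.
move=> bF; elim: r => [|a r IH].
  apply: (@bnd_ext (fun _ => 0)); first by move=> x; rewrite big_nil.
  by exists 0; split=> // x; rewrite mul0r /ipnorm ip0l sqrtr0.
case: (boolP (P a)) => Pa.
  apply: (@bnd_ext (fun x => F a x + \sum_(i <- r | P i) F i x)).
    by move=> x; rewrite big_cons Pa.
  exact: bnd_add.
apply: (bnd_ext _ IH) => x; by rewrite big_cons (negbTE Pa).
Qed.
Lemma bnd_shift A z : bnd A -> bnd (fun x => A x - z *: x).
Proof.
move=> bA; apply: bnd_add => //.
exists (cn (- z)); split; first exact: sqrtr_ge0.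
by move=> x; rewrite -scaleNr nmZ.
Qed.

Lemma op_lin T : bounded_op ip T -> lin T.
Proof. by case=> l _ a x y; apply: l. Qed.
Lemma op_bnd T : bounded_op ip T -> bnd T.
Proof.
case=> _ [c hc]; exists `|c|; split=> // x.
apply: (le_trans (hc x)); apply: ler_wpM2r; [exact: nm_ge0|exact: ler_norm].
Qed.

Lemma adj_lin T Ta : lin T -> is_adjoint ip T Ta -> lin Ta.
Proof.
move=> lT hT a x y; apply: ip_ext => u.
by rewrite -hT ipDr ipZr hT ipDr ipZr -!hT.
Qed.

Lemma adj_bnd T Ta : bnd T -> is_adjoint ip T Ta -> bnd Ta.
Proof.
move=> [M [M0 hM]] hT; exists M; split=> // y.
have h1 : nm (Ta y) ^+ 2 <= M * nm (Ta y) * nm y.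
  rewrite nm_sq.
  rewrite -hT. apply: (le_trans (Re_ip_le _ _)).
  by apply: ler_wpM2r; [exact: nm_ge0|exact: hM].
have [->|nz] := eqVneq (nm (Ta y)) 0.
  by rewrite mulr_ge0 // nm_ge0.
have p : 0 < nm (Ta y) by rewrite lt0r nz nm_ge0.
move: h1; rewrite expr2 -mulrA (mulrC M) -mulrA ler_pM2l //; by rewrite mulrC.
Qed.

Lemma adj_shift T Ta z : is_adjoint ip T Ta ->
  is_adjoint ip (fun x => T x - z *: x) (fun x => Ta x - conjc z *: x).
Proof.
move=> hT x y; rewrite ipBl ipBr ipZl ipZr conjK hT //.
Qed.

Lemma comm_shift P Q a b : lin P -> lin Q -> (forall x, P (Q x) = Q (P x)) ->
  forall x, P (Q x - b *: x) - a *: (Q x - b *: x)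
          = Q (P x - a *: x) - b *: (P x - a *: x).
Proof.
move=> lP lQ c x; rewrite (linB lP) (linB lQ) (linZ lP) (linZ lQ) c.
rewrite !scalerBr !scalerA mulrC.
by rewrite !opprB !addrA -!(addrAC _ ((b * a) *: x)) (addrAC (_ + (b * a) *: x)).
Qed.


Lemma coer_inj (B : H -> H) (c : R) : 0 < c ->
  (forall x, c * N2 x <= complex.Re (ip (B x) x)) -> forall x, B x = 0 -> x = 0.
Proof.
move=> c0 hc x Bx; apply: N2_eq0; apply/eqP; rewrite eq_le N2ge0 andbT.
have := hc x; rewrite Bx ip0l /= => h.
by rewrite -(pmulr_rle0 _ c0).
Qed.

Lemma richardson (B : H -> H) (M c : R) : lin B -> 0 < c ->
  (forall x, nm (B x) <= M * nm x) ->
  (forall x, c * N2 x <= complex.Re (ip (B x) x)) -> forall w, exists x, B x = w.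
Proof.
move=> lB c0 hM hc w.
pose K := `|M| + c.
have K0 : 0 < K by rewrite /K ltr_pwDr.
have cK : c <= K by rewrite /K lerDr.
have hK : forall x, nm (B x) <= K * nm x.
  move=> x; apply: (le_trans (hM x)); apply: ler_wpM2r; first exact: nm_ge0.
  by apply: (le_trans (ler_norm M)); rewrite /K lerDl ltW.
pose t := c / K ^+ 2.
have t0 : 0 < t by rewrite /t divr_gt0 // exprn_gt0.
have tK : t * K ^+ 2 = c by rewrite /t divfK // expf_neq0 // gt_eqF.
pose s := 1 - t * c.
have tc1 : t * c <= 1.
  have : t * c * K ^+ 2 <= 1 * K ^+ 2.
    rewrite mulrAC tK mul1r; nra.
  by rewrite ler_pM2r // exprn_gt0.
have s0 : 0 <= s by rewrite /s subr_ge0.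
have s1 : s < 1 by rewrite /s ltrBlDr ltrDl mulr_gt0.
pose q := Num.sqrt s.
have q0 : 0 <= q := sqrtr_ge0 _.
have q1 : q < 1 by rewrite /q -sqrtr1 ltr_sqrt.
have qq : q ^+ 2 = s by rewrite /q sqr_sqrtr.
have contr : forall e, nm (e - t%:C *: B e) <= q * nm e.
  move=> e; rewrite -ler_sqr ?nnegrE ?mulr_ge0 ?nm_ge0 //.
  rewrite nm_sq exprMn qq -scaleNr -oppC N2D N2ZC ipZr conjC_real ReMC.
  rewrite Re_ipC -!nm_sq.
  have h1 : nm (B e) ^+ 2 <= K ^+ 2 * nm e ^+ 2.
    by rewrite -exprMn ler_sqr ?nnegrE ?mulr_ge0 ?nm_ge0 ?(ltW K0) // hK.
  have h2 := hc e; rewrite -nm_sq in h2.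
  set X := nm (B e) ^+ 2 in h1 *; set Y := complex.Re _ in h2 *.
  set E := nm e ^+ 2 in h1 h2 *.
  have E0 : 0 <= E by rewrite /E sqr_ge0.
  rewrite /s sqrrN.
  have : t ^+ 2 * X <= t ^+ 2 * (K ^+ 2 * E) by rewrite ler_wpM2l // sqr_ge0.
  have : t * (c * E) <= t * Y by rewrite ler_wpM2l // ltW.
  have e3 : t ^+ 2 * (K ^+ 2 * E) = t * c * E.
    by rewrite -tK; ring.
  rewrite e3 => ha hb. nra.
pose f := fun v => v + t%:C *: (w - B v).
pose x := fun k => iter k f 0.
pose r := fun k => w - B (x k).
have xS : forall k, x k.+1 = x k + t%:C *: r k by [].
have rS : forall k, r k.+1 = r k - t%:C *: B (r k).
  move=> k; rewrite /r xS (linD lB) (linZ lB) (linB lB) opprD addrA.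
  by rewrite -(linB lB) -(linZ lB).
have r0 : r 0 = w by rewrite /r /x /= lin0 // subr0.
have rb : forall k, nm (r k) <= q ^+ k * nm w.
  elim=> [|k IH]; first by rewrite r0 expr0 mul1r.
  rewrite rS; apply: (le_trans (contr _)).
  by rewrite exprS -mulrA ler_wpM2l.
have tC : 0 <= t by apply: ltW.
have dx : forall k, nm (x k.+1 - x k) <= t * (q ^+ k * nm w).
  by move=> k; rewrite xS addrC addKr nmZC ger0_norm // ler_wpM2l.
have q1' : 0 < 1 - q by rewrite subr_gt0.
pose C := t * nm w / (1 - q).
have C0 : 0 <= C by rewrite /C; apply: divr_ge0; [apply: mulr_ge0; [exact: tC|exact: nm_ge0]|exact: ltW].
have cb : forall p d, nm (x (p + d)%N - x p) <= C * (q ^+ p - q ^+ (p + d)).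
  move=> p; elim=> [|d IH].
    by rewrite addn0 !subrr mulr0 nm0.
  apply: (le_trans (nm_sub_tri _ (x (p + d)%N) _)).
  rewrite addnS; apply: le_trans (lerD (dx _) IH) _.
  rewrite le_eqVlt; apply/orP; left; apply/eqP.
  rewrite /C exprS; field; by rewrite gt_eqF.
have cb2 : forall p m, (p <= m)%N -> nm (x m - x p) <= C * q ^+ p.
  move=> p m /subnKC <-; apply: (le_trans (cb _ _)).
  rewrite ler_wpM2l // lerBlDr lerDl exprn_ge0 //.
have qcvg : (fun k => q ^+ k) @ \oo --> (0 : R).
  by apply: cvg_expr; rewrite ger0_norm.
have [l hl] : exists l, (fun m => nm (x m - l)) @ \oo --> (0 : R).
  case: hip => _ _ _ _ hc'; apply: hc' => e e0.
  have [N hN] := eps_cvg0 qcvg (divr_gt0 (divr_gt0 e0 (ltr0Sn _ 1)) (ltr_wpDl C0 ltr01) : 0 < e / 2 / (C + 1)).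
  exists N => m p Nm Np.
  have hq : C * q ^+ N < e / 2.
    have := hN N (leqnn N); rewrite ger0_norm ?exprn_ge0 //.
    rewrite ltr_pdivlMr ?ltr_wpDl //; move=> h.
    have : 0 <= q ^+ N by rewrite exprn_ge0.
    nra.
  apply: (le_lt_trans (nm_sub_tri _ (x N) _)).
  rewrite (nmB (x N)).
  have := cb2 _ _ Nm; have := cb2 _ _ Np. 
  move=> h1 h2; have := lerD h2 h1; move/le_lt_trans; apply.
  have -> : e = e / 2 + e / 2 by rewrite -splitr.
  by rewrite ltrD.
exists l; apply/eqP; rewrite -subr_eq0; apply/eqP; apply: nm_eq0; apply/eqP; rewrite eq_le nm_ge0 andbT.
apply: le0_eps => e e0.
have e40 : 0 < e / 2 / (K + 1) by rewrite !divr_gt0 // ltr_wpDl // ltW.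
have [N1 hN1] := eps_cvg0 hl e40.
have e50 : 0 < e / 2 / (nm w + 1) by rewrite !divr_gt0 // ltr_wpDl // nm_ge0.
have [N2' hN2] := eps_cvg0 qcvg e50.
pose m := (N1 + N2')%N.
apply: (le_trans (nm_sub_tri _ (B (x m)) _)).
rewrite -(linB lB) (nmB (B (x m))) -/(r m).
have h1 := hN1 m (leq_addr _ _); rewrite ger0_norm ?nm_ge0 // in h1.
have h2 := hN2 m (leq_addl _ _); rewrite ger0_norm ?exprn_ge0 // in h2.
have h3 := hK (l - x m); rewrite nmB in h3.
have h4 := rb m.
have hw := nm_ge0 w.
have hx := nm_ge0 (x m - l).
have K1 : 0 < K + 1 by rewrite ltr_wpDl // ltW.
have w1 : 0 < nm w + 1 by rewrite ltr_wpDl // nm_ge0.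
rewrite ltr_pdivlMr // in h1.
rewrite ltr_pdivlMr // in h2.
have qm0 : 0 <= q ^+ m by rewrite exprn_ge0.
have h5 : K * nm (x m - l) <= nm (x m - l) * (K + 1) by nra.
have h6 : q ^+ m * nm w <= q ^+ m * (nm w + 1) by nra.
lra.
Qed.
End Hil.

Section Koszul.
Variables (R : realType) (H : lmodType R[i]) (n : nat) (A Ad : 'I_n -> H -> H).
Hypothesis lA : forall j, lin (A j).
Hypothesis lAd : forall j, lin (Ad j).
Hypothesis cAA : forall i j, i != j -> forall x, A i (A j x) = A j (A i x).
Hypothesis cAdA : forall i j, i != j -> forall x, Ad i (A j x) = A j (Ad i x).

Definition sg (S : {set 'I_n}) (j : 'I_n) : R[i] := (-1) ^+ #|[set i in S | (i < j)%N]|.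
Definition Dst (h : {set 'I_n} -> H) (S : {set 'I_n}) : H :=
  \sum_(j < n | j \in S) sg (S :\ j) j *: Ad j (h (S :\ j)).
Definition Lap (S : {set 'I_n}) (x : H) : H :=
  \sum_(i < n | i \notin S) A i (Ad i x) + \sum_(i < n | i \in S) Ad i (A i x).

Lemma koszulDE (f : {set 'I_n} -> H) (S : {set 'I_n}) :
  koszulD A f S = \sum_(j < n | j \notin S) sg S j *: A j (f (j |: S)).
Proof. by []. Qed.

Lemma card_lt_U1 (x : 'I_n) (S : {set 'I_n}) (j : 'I_n) : x \notin S ->
  #|[set i in x |: S | (i < j)%N]| = ((x < j)%N + #|[set i in S | (i < j)%N]|)%N.
Proof.
move=> xS.
have -> : [set i in x |: S | (i < j)%N] =
   if (x < j)%N then x |: [set i in S | (i < j)%N] else [set i in S | (i < j)%N].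
  apply/setP => i; case: ifP => xj; rewrite !inE;
  by case: (eqVneq i x) => [->|] //=; rewrite ?xj ?(negbTE xS) ?andbF.
case: ifP => xj //; by rewrite cardsU1 inE (negbTE xS).
Qed.

Lemma sg_U1 (x : 'I_n) (S : {set 'I_n}) j : x \notin S -> sg (x |: S) j = (-1) ^+ (x < j)%N * sg S j.
Proof. by move=> xS; rewrite /sg card_lt_U1 // exprD. Qed.
Lemma sg_D1 (x : 'I_n) (S : {set 'I_n}) j : x \in S -> sg S j = (-1) ^+ (x < j)%N * sg (S :\ x) j.
Proof.
move=> xS; rewrite -sg_U1 ?setD11 //; by rewrite finset.setD1K.
Qed.
Lemma sq_sign b : (-1) ^+ b * (-1) ^+ b = 1 :> R[i].
Proof. by rewrite -exprMn mulrNN mulr1 expr1n. Qed.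
Lemma sgK (S : {set 'I_n}) j : sg S j * sg S j = 1.
Proof. exact: sq_sign. Qed.
Lemma sgsw (i j : 'I_n) : i != j -> (-1) ^+ (j < i)%N = - (-1) ^+ (i < j)%N :> R[i].
Proof.
move=> ij; case: (ltngtP i j) => h.
- by rewrite /= expr1 expr0 opprK.
- by rewrite /= expr1 expr0.
- by move: ij; rewrite (val_inj h) eqxx.
Qed.

Lemma setD1U1 (i j : 'I_n) S : i != j -> (j |: S) :\ i = j |: (S :\ i).
Proof.
move=> ij; apply/setP => k; rewrite !inE.
by case: (eqVneq k i) => [->|//]; rewrite (negbTE ij).
Qed.

Lemma lin_Lap (S : {set 'I_n}) : lin (Lap S).
Proof.
apply: lin_add; apply: lin_sumf => i; apply: lin_comp => //.
Qed.

Lemma DDst (h : {set 'I_n} -> H) (S : {set 'I_n}) : koszulD A (Dst h) S + Dst (koszulD A h) S = Lap S (h S).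
Proof.
have L1 : forall j, j \notin S -> sg S j *: A j (Dst h (j |: S)) =
   A j (Ad j (h S)) + \sum_(i < n | i \in S)
     (sg S j * sg (j |: (S :\ i)) i) *: A j (Ad i (h (j |: (S :\ i)))).
  move=> j jS; rewrite /Dst (bigD1 j) ?setU11 //= setU1K //.
  rewrite (linD (lA j)) (linZ (lA j)) scalerDr scalerA sgK scale1r; congr (_ + _).
  rewrite (lin_sum (lA j)) scaler_sumr; apply: eq_big => i.
    rewrite !inE; case: (eqVneq i j) => [->|] /=; [exact/esym/negbTE | by rewrite andbT].
  move=> /andP[_ ij]; by rewrite setD1U1 // (linZ (lA j)) scalerA.
have L2 : forall i, i \in S -> sg (S :\ i) i *: Ad i (koszulD A h (S :\ i)) =
   Ad i (A i (h S)) + \sum_(j < n | j \notin S)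
     (sg (S :\ i) i * sg (S :\ i) j) *: Ad i (A j (h (j |: (S :\ i)))).
  move=> i iS; rewrite koszulDE (bigD1 i) ?setD11 //= finset.setD1K //.
  rewrite (linD (lAd i)) (linZ (lAd i)) scalerDr scalerA sgK scale1r; congr (_ + _).
  rewrite (lin_sum (lAd i)) scaler_sumr; apply: eq_big => j.
    rewrite !inE; case: (eqVneq j i) => [->|] /=; [exact/esym/negbF | by rewrite andbT].
  by move=> _; rewrite (linZ (lAd i)) scalerA.
rewrite koszulDE (eq_bigr _ L1) [Dst (koszulD A h) S]/Dst (eq_bigr _ L2).
rewrite !big_split /= /Lap addrACA -[RHS]addr0; congr (_ + _).
rewrite [X in _ + X = 0]exchange_big -big_split /=; apply: big1 => j jS.
rewrite -big_split; apply: big1 => i iS /=.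
have ij : i != j by apply: contraNneq jS => <-.
have jSi : j \notin S :\ i by rewrite !inE negb_and jS orbT.
rewrite (cAdA ij) -scalerDl (sg_D1 _ iS) (sg_U1 _ jSi).
rewrite (sgsw ij).
have := sq_sign (i < j)%N.
move: ((-1) ^+ (i < j)%N) (sg (S :\ i) j) (sg (S :\ i) i) => e a b he.
have -> : e * a * (- e * b) + b * a = 0.
  have -> : e * a * (- e * b) = - (e * e) * (a * b) by ring.
  rewrite he; ring.
by rewrite scale0r.
Qed.

Lemma DD0 (g : {set 'I_n} -> H) (S : {set 'I_n}) : koszulD A (koszulD A g) S = 0.
Proof.
pose G (j i : 'I_n) := (sg S j * sg (j |: S) i) *: A j (A i (g (i |: (j |: S)))).
have E1 : koszulD A (koszulD A g) S =
    \sum_(j < n | j \notin S) \sum_(i < n | (i \notin S) && (i != j)) G j i.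
  rewrite koszulDE; apply: eq_bigr => j jS.
  rewrite koszulDE (lin_sum (lA j)) scaler_sumr; apply: eq_big => i.
    by rewrite !inE ssrbool.negb_or andbC.
  by move=> _; rewrite (linZ (lA j)) scalerA.
have E2 : forall i j, i \notin S -> j \notin S -> i != j -> G j i = - G i j.
  move=> i j iS jS ij; rewrite /G !sg_U1 // finset.setUCA (cAA ij).
  rewrite -scaleNr; congr (_ *: _).
  rewrite (sgsw ij).
  move: ((-1) ^+ (i < j)%N) (sg S i) (sg S j) => e a b; ring.
set X := \sum_(j < n | _) _ in E1.
have XN : X = - X.
  rewrite {1}/X (exchange_big_dep (fun i => i \notin S)) /=; last by move=> j i _ /andP[].
  rewrite -sumrN; apply: eq_bigr => i iS; rewrite -sumrN; apply: eq_big => j.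
    by rewrite iS /= eq_sym.
  by move=> /andP[jS /andP[_ ij]]; rewrite (E2 i j iS jS ij).
rewrite E1.
have : X + X = 0 by rewrite {1}XN addNr.
rewrite -mulr2n -scaler_nat => /eqP; rewrite scaler_eq0 pnatr_eq0 /= => /eqP //.
Qed.

Lemma Lap_comm (j : 'I_n) (S : {set 'I_n}) v : j \notin S ->
  A j (Lap (j |: S) v) = Lap S (A j v).
Proof.
move=> jS; rewrite /Lap (linD (lA j)) !(lin_sum (lA j)).
rewrite [in RHS](bigD1 j) //= [X in _ + X = _](bigD1 j) ?setU11 //=.
rewrite addrCA addrA; congr (_ + _ + _).
  apply: eq_big => i.
    by rewrite !inE ssrbool.negb_or andbC.
  move=> iS'; have ji : j != i by apply: contraNneq iS' => <-; rewrite setU11.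
  by rewrite (cAA ji) -(cAdA (_ : i != j)) // eq_sym.
apply: eq_big => i.
  rewrite !inE; case: (eqVneq i j) => [->|] /=; [exact/esym/negbTE | by rewrite andbT].
by move=> /andP[_ ij]; rewrite -(cAdA ij) -(cAA ij).
Qed.

Lemma Lap_D (h : {set 'I_n} -> H) (S : {set 'I_n}) :
  koszulD A (fun S => Lap S (h S)) S = Lap S (koszulD A h S).
Proof.
rewrite !koszulDE (lin_sum (lin_Lap S)); apply: eq_bigr => j jS.
by rewrite (linZ (lin_Lap S)) Lap_comm.
Qed.
End Koszul.

Lemma le_sum_term (R : realType) (I : finType) (P : pred I) (F : I -> R) j :
  (forall i, 0 <= F i) -> P j -> F j <= \sum_(i | P i) F i.
Proof.
move=> F0 Pj; rewrite (bigD1 j) //= lerDl; apply: sumr_ge0 => i _; exact: F0.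
Qed.

Unset Implicit Arguments.
Set Strict Implicit.

Theorem theorem2p2 (R : realType) (H : lmodType R[i]) (ip : H -> H -> R[i])
  (n : nat) (T Tadj : 'I_n -> H -> H) (z : 'I_n -> R[i]) :
  is_hilbert_space ip ->
  (forall j, bounded_op ip (T j)) ->
  (forall j, is_adjoint ip (T j) (Tadj j)) ->
  doubly_commuting T Tadj ->
  (forall j, property1 ip (T j) (Tadj j)) ->
  taylor_spectrum T z ->
  joint_approx_point_spectrum ip Tadj (fun j => conjc (z j)).
Proof.
move=> hip hb hadj hdc hp1 hts.
pose A := fun j x => T j x - z j *: x.
pose Ad := fun j x => Tadj j x - conjc (z j) *: x.
have lT : forall j, lin (T j) by move=> j; exact: (op_lin (hb j)).
have lTa : forall j, lin (Tadj j) by move=> j; have := @adj_lin _ _ _ hip _ _ (lT j) (hadj j).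
have lA : forall j, lin (A j) by move=> j; exact: (lin_shift (z j) (lT j)).
have lAd : forall j, lin (Ad j) by move=> j; exact: (lin_shift (conjc (z j)) (lTa j)).
have bA : forall j, bnd ip (A j) by move=> j; exact: (bnd_shift hip (z j) (op_bnd (hb j))).
have bAd : forall j, bnd ip (Ad j).
  by move=> j; exact: (bnd_shift hip _ (adj_bnd hip (op_bnd (hb j)) (hadj j))).
have adjA : forall j, is_adjoint ip (A j) (Ad j).
  by move=> j; exact: (adj_shift hip (z j) (hadj j)).
have cAA : forall i j, i != j -> forall x, A i (A j x) = A j (A i x).
  move=> i j ij x; have [c _] := hdc i j ij; exact: (comm_shift (z i) (z j) (lT i) (lT j) c x).
have cAdA : forall i j, i != j -> forall x, Ad i (A j x) = A j (Ad i x).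
  move=> i j ij x; have [_ c] := hdc i j ij; exact: (comm_shift (conjc (z i)) (z j) (lTa i) (lT j) c x).
pose Q := fun (S : {set 'I_n}) x =>
  \sum_(i < n | i \notin S) complex.Re (ip (Ad i x) (Ad i x)) +
  \sum_(i < n | i \in S) complex.Re (ip (A i x) (A i x)).
have Q0 : forall S x, 0 <= Q S x.
  by move=> S x; rewrite addr_ge0 // sumr_ge0 // => i _; exact: N2ge0.
have LapQ : forall S x, complex.Re (ip (Lap A Ad S x) x) = Q S x.
  move=> S x; rewrite /Lap (ipDl hip) !(ip_suml hip) ReD !Re_sum; congr (_ + _).
    by apply: eq_bigr => i _; rewrite adjA.
  by apply: eq_bigr => i _; rewrite (ipC hip) -adjA ReJ.
have [Hall|Hnot] := pselect (forall S : {set 'I_n}, exists c : R,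
   0 < c /\ forall x, c * complex.Re (ip x x) <= Q S x).
  exfalso; apply: hts => k _.
  have bL : forall S, bnd ip (Lap A Ad S).
    move=> S; rewrite /Lap; apply: (bnd_add hip).
      apply: (bnd_sumf hip) => i; exact: (bnd_comp (bA i) (bAd i)).
    apply: (bnd_sumf hip) => i; exact: (bnd_comp (bAd i) (bA i)).
  have surj : forall S w, exists x, Lap A Ad S x = w.
    move=> S w; have [c [c0 hc]] := Hall S; have [M [_ hM]] := bL S.
    have := richardson hip (lin_Lap lA lAd S) c0 hM.
    by apply=> x; rewrite LapQ; exact: hc.
  have inj : forall S x, Lap A Ad S x = 0 -> x = 0.
    move=> S x; have [c [c0 hc]] := Hall S.
    have := coer_inj hip c0 (B := Lap A Ad S).
    by apply=> y; rewrite LapQ; exact: hc.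
  split.
    move=> f kf Df.
    pose h := fun S => projT1 (cid (surj S (f S))).
    have hh : forall S, Lap A Ad S (h S) = f S.
      by move=> S; rewrite /h; case: (cid _).
    have kh : kchain k h.
      by move=> S nS; apply: (inj S); rewrite hh kf.
    have Dh : forall S, koszulD A h S = 0.
      move=> S; apply: (inj S); rewrite -(Lap_D lA lAd cAA cAdA).
      have -> : (fun S0 => Lap A Ad S0 (h S0)) = f by apply: funext => S0.
      by rewrite Df.
    exists (Dst Ad h); split.
      move=> S nS; rewrite /Dst big1 // => j jS.
      rewrite kh ?(lin0 (lAd j)) ?scaler0 //.
      apply: contra nS => /eqP e; by rewrite (cardsD1 j S) jS e.
    apply: funext => S.
    have := DDst lA lAd cAdA h S; rewrite hh.
    have -> : Dst Ad (koszulD A h) S = 0.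
      rewrite /Dst big1 // => j _; by rewrite Dh (lin0 (lAd j)) scaler0.
    by rewrite addr0.
  by move=> g _; apply: funext => S; exact: (DD0 lA cAA).
have [S HS] : exists S : {set 'I_n}, ~ (exists c : R,
   0 < c /\ forall x, c * complex.Re (ip x x) <= Q S x) by apply/existsNP.
have hx : forall m : nat, exists x, Q S x < (m.+1%:R)^-1 * complex.Re (ip x x).
  move=> m; have : ~ (forall x, (m.+1%:R)^-1 * complex.Re (ip x x) <= Q S x).
    move=> hall; apply: HS; exists (m.+1%:R)^-1; split => //.
    by rewrite invr_gt0 ltr0Sn.
  move=> /existsNP [x hxm]; exists x; rewrite ltNge; exact/negP.
pose x := fun m => projT1 (cid (hx m)).
have hxm : forall m, Q S (x m) < (m.+1%:R)^-1 * complex.Re (ip (x m) (x m)).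
  by move=> m; rewrite /x; case: (cid _).
have nx0 : forall m, 0 < ipnorm ip (x m).
  move=> m; rewrite lt0r nm_ge0 andbT; apply/eqP => e.
  have := hxm m; rewrite -(nm_sq hip) e expr0n /= mulr0.
  by rewrite ltNge Q0.
pose y := fun m => ((ipnorm ip (x m))^-1)%:C%C *: x m.
have y1 : forall m, ipnorm ip (y m) = 1.
  move=> m; rewrite /y (nmZC hip) ger0_norm ?invr_ge0 ?nm_ge0 //.
  by rewrite mulVf // gt_eqF.
have QZ : forall r v, Q S ((r%:C)%C *: v) = r ^+ 2 * Q S v.
  move=> r v; rewrite /Q mulrDr !mulr_sumr; congr (_ + _); apply: eq_bigr => i _;
  by rewrite ?(linZ (lA i)) ?(linZ (lAd i)) (N2ZC hip).
have Qy : forall m, Q S (y m) <= (m.+1%:R)^-1.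
  move=> m; rewrite /y QZ; have := hxm m; rewrite -(nm_sq hip).
  set a := ipnorm ip (x m); have a0 := nx0 m; move=> h.
  apply: le_trans (ler_wpM2l (sqr_ge0 _) (ltW h)) _.
  by rewrite mulrCA exprVn mulVf ?mulr1 // expf_neq0 // gt_eqF.
exists y; split => // j.
case: (boolP (j \in S)) => jS.
  apply: (hp1 j (z j) y y1); apply: sq_harm_cvg => [m|m]; first exact: nm_ge0.
  rewrite (nm_sq hip); apply: le_trans (Qy m); rewrite /Q.
  have h1 : complex.Re (ip (A j (y m)) (A j (y m))) <=
     \sum_(i < n | i \in S) complex.Re (ip (A i (y m)) (A i (y m))).
    by apply: le_sum_term => // i; exact: N2ge0.
  have h2 : 0 <= \sum_(i < n | i \notin S) complex.Re (ip (Ad i (y m)) (Ad i (y m))).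
    by rewrite sumr_ge0 // => i _; exact: N2ge0.
  lra.
apply: sq_harm_cvg => [m|m]; first exact: nm_ge0.
rewrite (nm_sq hip); apply: le_trans (Qy m); rewrite /Q.
have h1 : complex.Re (ip (Ad j (y m)) (Ad j (y m))) <=
   \sum_(i < n | i \notin S) complex.Re (ip (Ad i (y m)) (Ad i (y m))).
  by apply: le_sum_term => // i; exact: N2ge0.
have h2 : 0 <= \sum_(i < n | i \in S) complex.Re (ip (A i (y m)) (A i (y m))).
  by rewrite sumr_ge0 // => i _; exact: N2ge0.
lra.
Qed.
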